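(* Let $\Lambda:\mathbb{R}_{\geq1}\to\mathbb{R}_{\geq1}$ be non-decreasing with $\lim_{x\to\infty}\Lambda(x)=\infty$. Then there exists $\varphi\in\Phi$ such that $\mathscr{L}^{s,\Lambda}\subseteq\mathscr{L}_{\varphi}$. Furthermore, there exists $\psi\in\Phi$ such that $\mathscr{L}^{s,\Lambda}\subseteq\mathscr{L}^{ss,\Lambda}\subseteq\mathscr{L}_{\psi}^{\ast}$.
   Context: $\mathscr{L}$ is the set of Liouville numbers (real irrational $\zeta$ such that for every $\eta>0$ there are infinitely many rationals $y/x$, $x\geq1$, with $|\zeta-y/x|\leq x^{-\eta}$). $\Vert\alpha\Vert$ is the distance from $\alpha$ to the nearest integer. $\Phi$ is the set of non-decreasing $\varphi:\mathbb{R}_{\geq 2}\to\mathbb{R}_{\geq 2}$ with $\varphi(x)\to\infty$. For $\varphi\in\Phi$, $\mathscr{L}_{\varphi}$ is the set of $\zeta\in\mathscr{L}$ such that for every positive integer $N$ there is an integer $q$ with $2\leq q\leq\varphi(N)$ and $\Vert q\zeta\Vert\leq q^{-N}$; $\mathscr{L}_{\varphi}^{\ast}$ is the set of $\zeta\in\mathscr{L}$ for which this holds for all $N\geq N_0(\zeta)$. For $\zeta\in\mathscr{L}$ let $s_n/t_n$ ($n\geq0$) be its continued fraction convergents. $\zeta$ is semi-strong if there is a strictly increasing sequence $(v_i)_{i\geq0}$ of non-negative integers such that, defining $\omega(v_i)$ by $|t_{v_i}\zeta-s_{v_i}|=t_{v_i}^{-\omega(v_i)}$, one has $\lim_{i\to\infty}\omega(v_i)=\infty$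 and $\limsup_{i\to\infty}\frac{\log t_{v_{i+1}}}{\log t_{v_i+1}}<\infty$. $\zeta$ is strong if $\lim_{i\to\infty}\omega(i)=\infty$ with $v_i=i$. $\mathscr{L}^{ss,\Lambda}$ (resp. $\mathscr{L}^{s,\Lambda}$) is the set of semi-strong (resp. strong) $\zeta$ for which a sequence $(v_i)$ as in the respective definition can be chosen with $\omega(v_i)\geq\Lambda(i)$ for all $i\geq1$. *)

(* Defs.v *)
From Stdlib Require Import Reals ZArith Lra List.
Open Scope R_scope.

Definition dist_int (a : R) : R :=
  Rmin (a - IZR (Int_part a)) (IZR (Int_part a) + 1 - a).

Definition irrational (z : R) : Prop :=
  forall (p q : Z), q <> 0%Z -> z <> IZR p / IZR q.

(* Liouville numbers: irrational, and for every eta > 0 the set of rationals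
   y/x (x >= 1) with |z - y/x| <= x^(-eta) is infinite (i.e. not contained in
   any finite list of reals). *)
Definition Liouville (z : R) : Prop :=
  irrational z /\
  forall eta : R, 0 < eta ->
    forall l : list R, exists (x y : Z), (1 <= x)%Z /\
      Rabs (z - IZR y / IZR x) <= Rpower (IZR x) (- eta) /\
      ~ In (IZR y / IZR x) l.

(* Phi: functions R_{>=2} -> R_{>=2}, non-decreasing, tending to infinity
   (represented as R -> R, constrained on [2, oo)). *)
Definition InPhi (phi : R -> R) : Prop :=
  (forall x, 2 <= x -> 2 <= phi x) /\
  (forall x y, 2 <= x -> x <= y -> phi x <= phi y) /\
  (forall M, exists X, 2 <= X /\ forall x, X <= x -> M <= phi x).

(* phi evaluated at the positive integer N; N = 1 lies outside the domain
   R_{>=2} of phi, so we evaluate at max(N,2). *)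
Definition phi_at (phi : R -> R) (N : nat) : R := phi (Rmax (INR N) 2).

Definition good_q (phi : R -> R) (z : R) (N : nat) : Prop :=
  exists q : Z, (2 <= q)%Z /\ IZR q <= phi_at phi N /\
    dist_int (IZR q * z) <= / (IZR q ^ N).

Definition L_phi (phi : R -> R) (z : R) : Prop :=
  Liouville z /\ forall N : nat, (1 <= N)%nat -> good_q phi z N.

Definition L_phi_star (phi : R -> R) (z : R) : Prop :=
  Liouville z /\ exists N0 : nat, forall N : nat,
    (1 <= N)%nat -> (N0 <= N)%nat -> good_q phi z N.

Fixpoint cf_rem (z : R) (n : nat) : R :=
  match n with
  | O => z
  | S m => let r := cf_rem z m in / (r - IZR (Int_part r))
  end.

Definition cf_a (z : R) (n : nat) : Z := Int_part (cf_rem z n).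

(* (p_n, q_n), (p_{n-1}, q_{n-1}) with p_{-1} = 1, q_{-1} = 0 *)
Fixpoint cf_pq (z : R) (n : nat) : (Z * Z) * (Z * Z) :=
  match n with
  | O => ((cf_a z 0, 1%Z), (1%Z, 0%Z))
  | S m =>
      let '((p, q), (p', q')) := cf_pq z m in
      let a := cf_a z (S m) in
      ((a * p + p', a * q + q')%Z, (p, q))
  end.

Definition cf_s (z : R) (n : nat) : Z := fst (fst (cf_pq z n)).
Definition cf_t (z : R) (n : nat) : Z := snd (fst (cf_pq z n)).

(* omega(n) defined by |t_n z - s_n| = t_n^(-omega(n)), i.e.
   omega(n) = - ln |t_n z - s_n| / ln t_n.  (When t_n = 1 no such omega exists;
   the formula then gives 0 since / 0 = 0 in Stdlib.) *)
Definition cf_omega (z : R) (n : nat) : R :=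
  - ln (Rabs (IZR (cf_t z n) * z - IZR (cf_s z n))) / ln (IZR (cf_t z n)).

Definition strictly_incr (v : nat -> nat) : Prop :=
  forall i, (v i < v (S i))%nat.

Definition tends_to_infty (u : nat -> R) : Prop :=
  forall M, exists i0, forall i, (i0 <= i)%nat -> M <= u i.

(* limsup_i log t_{v_{i+1}} / log t_{v_i + 1} < oo *)
Definition limsup_finite_cond (z : R) (v : nat -> nat) : Prop :=
  exists C : R, exists i0 : nat, forall i, (i0 <= i)%nat ->
    ln (IZR (cf_t z (v (S i)))) <= C * ln (IZR (cf_t z (S (v i)))).

Definition semi_strong_seq (z : R) (v : nat -> nat) : Prop :=
  strictly_incr v /\ tends_to_infty (fun i => cf_omega z (v i)) /\
  limsup_finite_cond z v.

Definition semi_strong (z : R) : Prop :=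
  Liouville z /\ exists v, semi_strong_seq z v.

Definition strong (z : R) : Prop :=
  Liouville z /\ tends_to_infty (cf_omega z).

Definition L_ss_Lambda (Lam : R -> R) (z : R) : Prop :=
  Liouville z /\ exists v, semi_strong_seq z v /\
    forall i, (1 <= i)%nat -> Lam (INR i) <= cf_omega z (v i).

Definition L_s_Lambda (Lam : R -> R) (z : R) : Prop :=
  strong z /\ forall i, (1 <= i)%nat -> Lam (INR i) <= cf_omega z i.

(* Main.v *)
Require Import Defs.
From Stdlib Require Import Reals Lra Lia ZArith ClassicalEpsilon.
Open Scope R_scope.

Lemma ln_le' x y : 0 < x -> x <= y -> ln x <= ln y.
Proof. intros Hx Hxy. destruct (Rle_lt_or_eq_dec _ _ Hxy) as [H|H].
  left; apply ln_increasing; auto. subst; lra. Qed.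

Lemma exp_le' x y : x <= y -> exp x <= exp y.
Proof. intros Hxy. destruct (Rle_lt_or_eq_dec _ _ Hxy) as [H|H].
  left; apply exp_increasing; auto. subst; lra. Qed.

Lemma cf_inv z (Hirr : irrational z) n : forall p q p' q',
  cf_pq z n = ((p,q),(p',q')) ->
  (1 <= q)%Z /\ (0 <= q')%Z /\ (p*q' - p'*q = 1 \/ p*q' - p'*q = -1)%Z /\
  1 < cf_rem z (S n) /\
  z = (IZR p * cf_rem z (S n) + IZR p') / (IZR q * cf_rem z (S n) + IZR q').
Proof.
  induction n as [|n IH]; intros p q p' q' E.
  - simpl in E. injection E as <- <- <- <-.
    pose proof (base_Int_part z) as [B1 B2].
    assert (Hne : z - IZR (Int_part z) <> 0).
    { intro H0. apply (Hirr (Int_part z) 1%Z); [lia|]. field_simplify; lra. }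
    assert (Hpos : 0 < z - IZR (Int_part z)) by lra.
    assert (Hr : cf_rem z 1 = / (z - IZR (Int_part z))) by reflexivity.
    rewrite Hr. unfold cf_a, cf_rem.
    split; [lia|split;[lia|split;[lia|split]]].
    + rewrite <- Rinv_1. apply Rinv_lt_contravar; lra.
    + field. lra.
  - cbn [cf_pq] in E. destruct (cf_pq z n) as [[p0 q0] [p0' q0']] eqn:E0.
    injection E as <- <- <- <-.
    destruct (IH _ _ _ _ eq_refl) as [Hq [Hq' [Hdet [Hr Hz]]]].
    set (r := cf_rem z (S n)) in *.
    assert (Hr2 : cf_rem z (S (S n)) = / (r - IZR (Int_part r))) by reflexivity.
    assert (Ha : cf_a z (S n) = Int_part r) by reflexivity.
    rewrite Hr2, Ha.
    set (a := Int_part r).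
    pose proof (base_Int_part r) as [B1 B2]. fold a in B1, B2.
    assert (Hq1 : 1 <= IZR q0) by (apply IZR_le; lia).
    assert (Hq0' : 0 <= IZR q0') by (apply IZR_le; lia).
    assert (Ha1 : (1 <= a)%Z).
    { assert (0 < IZR a) by lra. apply lt_0_IZR in H. lia. }
    assert (HA1 : 1 <= IZR a) by (apply IZR_le; lia).
    assert (Hne : r - IZR a <> 0).
    { intro H0. assert (r = IZR a) by lra.
      apply (Hirr (p0 * a + p0')%Z (q0 * a + q0')%Z); [nia|].
      rewrite Hz, H, !plus_IZR, !mult_IZR. reflexivity. }
    assert (Hpos : 0 < r - IZR a) by lra.
    split; [nia|split;[lia|split;[lia|split]]].
    + rewrite <- Rinv_1. apply Rinv_lt_contravar; lra.
    + rewrite Hz at 1. rewrite !plus_IZR, !mult_IZR. field.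
      split; [lra|nra].
Qed.

Lemma cf_key z (Hirr : irrational z) n :
  1 <= IZR (cf_t z n) /\
  0 < Rabs (IZR (cf_t z n) * z - IZR (cf_s z n)) /\
  1 <= IZR (cf_t z (S n)) /\
  Rabs (IZR (cf_t z n) * z - IZR (cf_s z n)) * IZR (cf_t z (S n)) <= 1.
Proof.
  unfold cf_t, cf_s. cbn [cf_pq].
  destruct (cf_pq z n) as [[p q] [p' q']] eqn:E0. simpl.
  destruct (cf_inv z Hirr n _ _ _ _ E0) as [Hq [Hq' [Hdet [Hr Hz]]]].
  assert (Ha : cf_a z (S n) = Int_part (cf_rem z (S n))) by reflexivity.
  rewrite Ha.
  set (r := cf_rem z (S n)) in *. set (a := Int_part r).
  pose proof (base_Int_part r) as [B1 B2]. fold a in B1, B2.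
  assert (Hq1 : 1 <= IZR q) by (apply IZR_le; lia).
  assert (Hq0' : 0 <= IZR q') by (apply IZR_le; lia).
  assert (Ha1 : (1 <= a)%Z).
  { assert (0 < IZR a) by lra. apply lt_0_IZR in H. lia. }
  assert (HA1 : 1 <= IZR a) by (apply IZR_le; lia).
  assert (Hden : 0 < IZR q * r + IZR q') by nra.
  assert (HE : IZR q * z - IZR p = IZR (q*p' - p*q') / (IZR q * r + IZR q')).
  { rewrite Hz. rewrite minus_IZR, !mult_IZR. field. lra. }
  assert (Habs : Rabs (IZR q * z - IZR p) = / (IZR q * r + IZR q')).
  { rewrite HE. unfold Rdiv. rewrite Rabs_mult, Rabs_inv.
    rewrite (Rabs_right (IZR q * r + IZR q')) by lra.
    replace (Rabs (IZR (q * p' - p * q'))) with 1. lra.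
    destruct Hdet as [Hd|Hd].
    - replace (q * p' - p * q')%Z with (-1)%Z by lia. rewrite Rabs_left; simpl; lra.
    - replace (q * p' - p * q')%Z with (1)%Z by lia. rewrite Rabs_right; lra. }
  rewrite Habs.
  assert (Ht : IZR (a * q + q') <= IZR q * r + IZR q').
  { rewrite plus_IZR, mult_IZR. nra. }
  assert (Ht1 : 1 <= IZR (a * q + q')) by (apply IZR_le; nia).
  split; [lra|split;[apply Rinv_0_lt_compat; lra|split;[lra|]]].
  apply Rmult_le_reg_l with (IZR q * r + IZR q'); [lra|].
  rewrite <- Rmult_assoc, Rinv_r by lra. lra.
Qed.

Lemma om_basic z (Hirr : irrational z) n : 0 < cf_omega z n ->
  (2 <= cf_t z n)%Z /\ 0 < ln (IZR (cf_t z n)) /\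
  cf_omega z n * ln (IZR (cf_t z n)) = - ln (Rabs (IZR (cf_t z n) * z - IZR (cf_s z n))).
Proof.
  intros Hw. destruct (cf_key z Hirr n) as [Ht [HE _]].
  unfold cf_omega in *.
  assert (H2 : (2 <= cf_t z n)%Z).
  { destruct (Z.eq_dec (cf_t z n) 1) as [Heq|Hne].
    - rewrite Heq in Hw. unfold Rdiv in Hw. rewrite ln_1, Rinv_0, Rmult_0_r in Hw. lra.
    - apply le_IZR in Ht. lia. }
  assert (Hl : 0 < ln (IZR (cf_t z n))).
  { rewrite <- ln_1. apply ln_increasing; [lra|]. apply IZR_le in H2. lra. }
  split; [auto|split;[auto|]]. field. lra.
Qed.

Lemma om_bound z (Hirr : irrational z) n (N : nat) : (1 <= N)%nat -> INR N <= cf_omega z n ->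
  (2 <= cf_t z n)%Z /\
  Rabs (IZR (cf_t z n) * z - IZR (cf_s z n)) <= / (IZR (cf_t z n) ^ N).
Proof.
  intros HN Hw. assert (HN1 : 1 <= INR N) by (apply (le_INR 1); auto).
  destruct (om_basic z Hirr n) as [H2 [Hl Heq]]; [lra|].
  destruct (cf_key z Hirr n) as [Ht [HE _]].
  split; auto.
  set (t := IZR (cf_t z n)) in *. set (A := Rabs _) in *.
  assert (Htp : 0 < t ^ N) by (apply pow_lt; lra).
  rewrite <- (exp_ln A) by lra. rewrite <- (exp_ln (/ (t ^ N))) by (apply Rinv_0_lt_compat; lra).
  apply exp_le'. rewrite ln_Rinv by lra. rewrite ln_pow by lra.
  assert (INR N * ln t <= cf_omega z n * ln t) by (apply Rmult_le_compat_r; lra).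
  lra.
Qed.

Lemma step_bound z (Hirr : irrational z) n :
  0 <= ln (IZR (cf_t z (S n))) /\
  ln (IZR (cf_t z (S n))) <= - ln (Rabs (IZR (cf_t z n) * z - IZR (cf_s z n))).
Proof.
  destruct (cf_key z Hirr n) as [Ht [HE [Ht' Hm]]].
  split. { rewrite <- ln_1. apply ln_le'; lra. }
  rewrite <- ln_Rinv by lra. apply ln_le'; [lra|].
  apply Rmult_le_reg_l with (Rabs (IZR (cf_t z n) * z - IZR (cf_s z n))); [lra|].
  rewrite Rinv_r by lra. lra.
Qed.

Lemma dist_int_le x s : dist_int x <= Rabs (x - IZR s).
Proof.
  unfold dist_int. pose proof (base_Int_part x) as [B1 B2].
  destruct (Z_le_gt_dec s (Int_part x)) as [H|H].
  - apply IZR_le in H. eapply Rle_trans; [apply Rmin_l|]. rewrite Rabs_right; lra.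
  - assert (IZR (Int_part x) + 1 <= IZR s) by (rewrite <- plus_IZR; apply IZR_le; lia).
    eapply Rle_trans; [apply Rmin_r|]. rewrite Rabs_left1; lra.
Qed.

Lemma chain (L w : nat -> R) (B L0 N : R) (i1 K : nat) :
  1 <= B -> 0 <= L0 -> L i1 <= L0 ->
  (forall j, (i1 <= j)%nat -> w j < N -> L (S j) <= B * L j) ->
  (forall j, (i1 + K <= j)%nat -> N <= w j) ->
  exists k, (i1 <= k)%nat /\ N <= w k /\ L k <= B ^ K * L0.
Proof.
  intros HB HL0 Hi Hstep Hend.
  assert (P: forall m, (exists k, (i1 <= k)%nat /\ N <= w k /\ L k <= B ^ m * L0)
                       \/ L (i1 + m)%nat <= B ^ m * L0).
  { induction m.
    - right. rewrite Nat.add_0_r. simpl. lra.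
    - assert (H0m : 0 <= B^m * L0) by (apply Rmult_le_pos; [apply pow_le; lra| lra]).
      destruct IHm as [[k [H1 [H2 H3]]] | H].
      + left. exists k. split; [|split]; auto. simpl. nra.
      + destruct (Rlt_le_dec (w (i1+m)%nat) N) as [Hlt|Hge].
        * right. replace (i1 + S m)%nat with (S (i1+m)) by lia. simpl.
          apply Rle_trans with (B * L (i1+m)%nat). apply Hstep; [lia|auto].
          rewrite Rmult_assoc. apply Rmult_le_compat_l; lra.
        * left. exists (i1+m)%nat. split; [lia|split;auto]. simpl. nra. }
  destruct (P K) as [H|H]; auto. exists (i1+K)%nat. split; [lia|split]; auto.
Qed.

Fixpoint kmax (f : nat -> nat) (n : nat) : nat :=
  match n with O => f O | S m => Nat.max (kmax f m) (f (S m)) end.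

Lemma kmax_ge f n : (f n <= kmax f n)%nat.
Proof. destruct n; simpl; lia. Qed.

Lemma kmax_mono f n : (kmax f n <= kmax f (S n))%nat.
Proof. simpl; lia. Qed.

Lemma up_mono x y : x <= y -> (up x <= up y)%Z.
Proof.
  intros H. destruct (archimed x) as [A1 A2]. destruct (archimed y) as [C1 C2].
  destruct (Z_le_gt_dec (up x) (up y)) as [h|h]; auto.
  assert (IZR (up y) + 1 <= IZR (up x)) by (rewrite <- plus_IZR; apply IZR_le; lia).
  lra.
Qed.

Lemma G_mono (G : nat -> R) : (forall n, G n <= G (S n)) ->
  forall m n, (m <= n)%nat -> G m <= G n.
Proof.
  intros HG m n H. induction H; [lra|]. eapply Rle_trans; [apply IHle|apply HG].
Qed.

Lemma InPhi_of (G : nat -> R) :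
  (forall n, 2 <= G n) -> (forall n, G n <= G (S n)) -> (forall n, INR n <= G n) ->
  InPhi (fun x => G (Z.to_nat (up x))).
Proof.
  intros H2 Hm Hi. split; [|split].
  - intros; apply H2.
  - intros x y Hx Hxy. apply G_mono; auto. apply Z2Nat.inj_le.
    + destruct (archimed x). apply le_IZR. lra.
    + destruct (archimed y). apply le_IZR. lra.
    + apply up_mono; auto.
  - intros M. exists (Rmax 2 M). split; [apply Rmax_l|].
    intros x Hx. eapply Rle_trans; [|apply Hi].
    destruct (archimed x) as [A1 A2].
    rewrite INR_IZR_INZ, Z2Nat.id.
    + pose proof (Rmax_r 2 M). lra.
    + apply le_IZR. pose proof (Rmax_l 2 M). lra.
Qed.

Lemma phi_at_ge (G : nat -> R) (N : nat) : (forall n, G n <= G (S n)) ->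
  G N <= phi_at (fun x => G (Z.to_nat (up x))) N.
Proof.
  intros Hm. unfold phi_at. apply G_mono; auto.
  destruct (archimed (Rmax (INR N) 2)) as [A1 A2].
  pose proof (Rmax_l (INR N) 2). pose proof (Rmax_r (INR N) 2).
  assert (Hz : (Z.of_nat N < up (Rmax (INR N) 2))%Z).
  { apply lt_IZR. rewrite <- INR_IZR_INZ. lra. }
  lia.
Qed.

Lemma nat_above x : exists n : nat, x <= INR n.
Proof.
  destruct (archimed (Rmax x 0)) as [A1 A2]. exists (Z.to_nat (up (Rmax x 0))).
  pose proof (Rmax_l x 0). pose proof (Rmax_r x 0).
  rewrite INR_IZR_INZ, Z2Nat.id. lra. apply le_IZR; lra.
Qed.

Lemma exp_ge y : y <= exp y.
Proof.
  destruct (Req_dec y 0) as [H|H].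
  - subst. rewrite exp_0. lra.
  - pose proof (exp_ineq1 y H). lra.
Qed.

Lemma ln2_lt1 : ln 2 < 1.
Proof.
  rewrite <- (ln_exp 1). apply ln_increasing; [lra|]. pose proof (exp_ineq1 1). lra.
Qed.

Lemma powpow_mono (a a' : R) (k k' : nat) : 1 <= a -> a <= a' -> (k <= k')%nat ->
  a ^ k <= a' ^ k'.
Proof.
  intros H1 H2 H3. apply Rle_trans with (a ^ k'). apply Rle_pow; auto.
  apply pow_incr; lra.
Qed.

Theorem proposition3p8 (Lam : R -> R)
  (HLam1 : forall x, 1 <= x -> 1 <= Lam x)
  (HLammono : forall x y, 1 <= x -> x <= y -> Lam x <= Lam y)
  (HLaminf : forall M, exists X, 1 <= X /\ forall x, X <= x -> M <= Lam x) :
  (exists phi : R -> R, InPhi phi /\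
     forall z, L_s_Lambda Lam z -> L_phi phi z) /\
  (exists psi : R -> R, InPhi psi /\
     (forall z, L_s_Lambda Lam z -> L_ss_Lambda Lam z) /\
     (forall z, L_ss_Lambda Lam z -> L_phi_star psi z)).
Proof.
  assert (Hex : forall n : nat, exists K : nat, forall x, INR K <= x -> INR n <= Lam x).
  { intro n. destruct (HLaminf (INR n)) as [X [HX1 HX]]. destruct (nat_above X) as [K HK].
    exists K. intros x Hx. apply HX. lra. }
  set (Kn := fun n => proj1_sig (constructive_indefinite_description _ (Hex n))).
  assert (HKn : forall n x, INR (Kn n) <= x -> INR n <= Lam x).
  { intros n. exact (proj2_sig (constructive_indefinite_description _ (Hex n))). }
  set (Km := kmax Kn).
  assert (HKm : forall n x, INR (Km n) <= x -> INR n <= Lam x).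
  { intros n x Hx. apply HKn. eapply Rle_trans; [|apply Hx]. apply le_INR, kmax_ge. }
  assert (HKmm : forall n, (Km n <= Km (S n))%nat) by (intros; apply kmax_mono).
  assert (HLamj : forall j : nat, (1 <= j)%nat -> 1 <= Lam (INR j)).
  { intros j Hj. apply HLam1. apply (le_INR 1); auto. }
  split.
  -
    set (G := fun n => exp ((INR n + 1) ^ (Km n) * (INR n + 1)) + 2).
    assert (HGm : forall n, G n <= G (S n)).
    { intros n. unfold G. rewrite S_INR.
      assert (0 <= INR n) by apply pos_INR.
      assert ((INR n + 1) ^ Km n <= (INR n + 1 + 1) ^ Km (S n)) by (apply powpow_mono; auto; lra).
      assert (1 <= (INR n + 1) ^ Km n) by (apply pow_R1_Rle; lra).
      apply Rplus_le_compat_r, exp_le'. apply Rmult_le_compat; lra. }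
    exists (fun x => G (Z.to_nat (up x))). split.
    + apply InPhi_of; auto.
      * intros n. unfold G. pose proof (exp_pos ((INR n + 1) ^ Km n * (INR n + 1))). lra.
      * intros n. unfold G. assert (0 <= INR n) by apply pos_INR.
        assert (1 <= (INR n + 1) ^ Km n) by (apply pow_R1_Rle; lra).
        pose proof (exp_ge ((INR n + 1) ^ Km n * (INR n + 1))). nra.
    + intros z [[HL Htend] Hlam]. pose proof (proj1 HL) as Hirr.
      split; [exact HL|]. intros N HN. unfold good_q.
      assert (HN1 : 1 <= INR N) by (apply (le_INR 1); auto).
      assert (Hw1 : 0 < cf_omega z 1).
      { pose proof (Hlam 1%nat (le_n 1)). pose proof (HLamj 1%nat (le_n 1)). lra. }
      destruct (om_basic z Hirr 1 Hw1) as [Ht1 _].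
      destruct (Rle_lt_dec (2 ^ (S N)) (IZR (cf_t z 1))) as [Hbig|Hsmall].
      * exists 2%Z. split; [lia|split].
        { eapply Rle_trans; [|apply phi_at_ge; auto]. unfold G.
          pose proof (exp_pos ((INR N + 1) ^ Km N * (INR N + 1))). lra. }
        destruct (cf_key z Hirr 0) as [_ [HE [_ Hm]]].
        assert (Ht0 : cf_t z 0 = 1%Z) by reflexivity. rewrite Ht0 in HE, Hm.
        eapply Rle_trans; [apply (dist_int_le _ (2 * cf_s z 0))|].
        rewrite mult_IZR.
        replace (IZR 2 * z - IZR 2 * IZR (cf_s z 0)) with (2 * (IZR 1 * z - IZR (cf_s z 0))) by (simpl; ring).
        rewrite Rabs_mult, (Rabs_right 2) by lra.
        set (A := Rabs _) in *. set (t := IZR (cf_t z 1)) in *.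
        assert (Hp : 0 < 2 ^ N) by (apply pow_lt; lra).
        simpl in Hbig.
        apply Rmult_le_reg_r with (2 ^ N); [lra|]. rewrite Rinv_l by lra. nra.
      * assert (HL1 : ln (IZR (cf_t z 1)) <= INR N + 1).
        { apply Rle_trans with (ln (2 ^ S N)).
          - apply ln_le'; [|lra]. apply IZR_lt. lia.
          - rewrite ln_pow by lra. rewrite S_INR. pose proof ln2_lt1.
            assert (0 < ln 2) by (rewrite <- ln_1; apply ln_increasing; lra). nra. }
        destruct (chain (fun j => ln (IZR (cf_t z j))) (cf_omega z) (INR N) (INR N + 1) (INR N)
                   1 (Km N)) as [k [Hk1 [Hwk HLk]]]; auto; try lra.
        { intros j Hj Hwj.
          assert (Hwpos : 0 < cf_omega z j) by (pose proof (Hlam j Hj); pose proof (HLamj j Hj); lra).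
          destruct (om_basic z Hirr j Hwpos) as [_ [Hl Heq]].
          destruct (step_bound z Hirr j) as [_ Hs]. nra. }
        { intros j Hj. eapply Rle_trans; [|apply Hlam; lia]. apply HKm.
          apply le_INR. lia. }
        destruct (om_bound z Hirr k N HN Hwk) as [Ht2 Hb].
        exists (cf_t z k). split; [exact Ht2|split].
        { eapply Rle_trans; [|apply phi_at_ge; auto]. unfold G.
          assert (IZR (cf_t z k) <= exp ((INR N + 1) ^ Km N * (INR N + 1))); [|lra].
          rewrite <- (exp_ln (IZR (cf_t z k))) by (apply IZR_lt; lia).
          apply exp_le'. eapply Rle_trans; [apply HLk|].
          apply Rmult_le_compat_r; [lra|]. apply pow_incr; lra. }
        eapply Rle_trans; [apply dist_int_le|]. exact Hb.
  -
    set (G := fun n => exp ((INR n + 1) ^ (2 * Km n + 1)) + 2).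
    assert (HGm : forall n, G n <= G (S n)).
    { intros n. unfold G. rewrite S_INR.
      assert (0 <= INR n) by apply pos_INR.
      apply Rplus_le_compat_r, exp_le'. apply powpow_mono; try lra. specialize (HKmm n). lia. }
    exists (fun x => G (Z.to_nat (up x))). split; [|split].
    + apply InPhi_of; auto.
      * intros n. unfold G. pose proof (exp_pos ((INR n + 1) ^ (2 * Km n + 1))). lra.
      * intros n. unfold G. assert (0 <= INR n) by apply pos_INR.
        assert (INR n + 1 <= (INR n + 1) ^ (2 * Km n + 1)).
        { rewrite <- (pow_1 (INR n + 1)) at 1. apply Rle_pow; lia || lra. }
        pose proof (exp_ge ((INR n + 1) ^ (2 * Km n + 1))). lra.
    + intros z [[HL Htend] Hlam]. split; [exact HL|]. exists (fun i => i).
      split; [|exact Hlam]. split; [intro i; lia|split; [exact Htend|]].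
      exists 1, 0%nat. intros i _. lra.
    + intros z [HL [v [[Hinc [Htend [C [i0 Hlim]]]] Hlam]]]. pose proof (proj1 HL) as Hirr.
      split; [exact HL|].
      set (i1 := Nat.max i0 1).
      destruct (nat_above (Rmax (Rabs C + 1) (ln (IZR (cf_t z (v i1)))))) as [N0 HN0].
      pose proof (Rmax_l (Rabs C + 1) (ln (IZR (cf_t z (v i1))))).
      pose proof (Rmax_r (Rabs C + 1) (ln (IZR (cf_t z (v i1))))).
      exists N0. intros N HN HNN0. unfold good_q.
      assert (HN1 : 1 <= INR N) by (apply (le_INR 1); auto).
      assert (HNN : INR N0 <= INR N) by (apply le_INR; auto).
      pose proof (Rabs_pos C).
      destruct (chain (fun j => ln (IZR (cf_t z (v j)))) (fun j => cf_omega z (v j))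
                 ((Rabs C + 1) * INR N) (INR N) (INR N) i1 (Km N)) as [k [Hk1 [Hwk HLk]]];
        auto; try lra.
      { nra. }
      { intros j Hj Hwj.
        assert (Hj1 : (1 <= j)%nat) by lia.
        assert (Hwpos : 0 < cf_omega z (v j)) by (pose proof (Hlam j Hj1); pose proof (HLamj j Hj1); lra).
        destruct (om_basic z Hirr (v j) Hwpos) as [_ [Hl Heq]].
        destruct (step_bound z Hirr (v j)) as [Hs0 Hs].
        pose proof (Hlim j ltac:(lia)) as Hc. simpl in Hc.
        set (X := ln (IZR (cf_t z (S (v j))))) in *.
        assert (C * X <= Rabs C * X) by (apply Rmult_le_compat_r; [lra|apply Rle_abs]).
        assert (X <= INR N * ln (IZR (cf_t z (v j)))) by nra.
        nra. }
      { intros j Hj. eapply Rle_trans; [|apply Hlam; lia]. apply HKm.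
        apply le_INR. lia. }
      destruct (om_bound z Hirr (v k) N HN Hwk) as [Ht2 Hb].
      exists (cf_t z (v k)). split; [exact Ht2|split].
      { eapply Rle_trans; [|apply phi_at_ge; auto]. unfold G.
        assert (IZR (cf_t z (v k)) <= exp ((INR N + 1) ^ (2 * Km N + 1))); [|lra].
        rewrite <- (exp_ln (IZR (cf_t z (v k)))) by (apply IZR_lt; lia).
        apply exp_le'. eapply Rle_trans; [apply HLk|].
        rewrite pow_add, pow_mult, pow_1.
        assert (HB : (Rabs C + 1) * INR N <= (INR N + 1) ^ 2) by nra.
        assert (0 <= ((Rabs C + 1) * INR N) ^ Km N) by (apply pow_le; nra).
        assert (((Rabs C + 1) * INR N) ^ Km N <= ((INR N + 1) ^ 2) ^ Km N)
          by (apply pow_incr; nra).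
        nra. }
      eapply Rle_trans; [apply dist_int_le|]. exact Hb.
Qed.
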